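(* Assume (A1), (A2), (A6) together with: (a) $A\perp\{Y(1,1),Y(1,0),M(0),M(1)\}\mid X$; (b) $\{M(0),M(1)\}\perp\{Y(1,0),Y(1,1)\}\mid X$; (c) there is $\epsilon>0$ with $P\{P(A=1,M=m\mid X)\ge\epsilon\}=1$ for $m=0,1$ and $P\{P(A=0\mid X)\ge\epsilon\}=1$. Then for (almost) every $x$, $$\psi(x) = P(Y(1,0)=0\mid Y(1,1)=1,X=x)\,P(M(0)=0\mid M(1)=1,X=x) = \Big[1-\frac{\mu_{10}(x)}{\mu_{11}(x)}\Big]\Big[1-\frac{\gamma_0(x)}{\gamma_1(x)}\Big].$$
   Context: Observed data $O=(X,A,M,Y)$ with covariates $X\in\mathbb{R}^d$, binary exposure $A$, binary mediator $M$, binary outcome $Y$. For $a,m\in\{0,1\}$, $Y(a,m)$ is the potential outcome under $A=a,M=m$, $M(a)$ the potential mediator, $Y(a):=Y(a,M(a))$, cross-world $Y(a,M(a'))$ by substitution, all on a common probability space with $O$. $\mu_{am}(x)=P(Y=1\mid A=a,M=m,X=x)$, $\gamma_a(x)=P(M=1\mid A=a,X=x)$. $\psi(x)=P(Y(1,M(0))=0,\,Y(0,M(0))=0\mid Y(1,M(1))=1,M(1)=1,X=x)$. (A1) consistency: $A=a,M=m\Rightarrow Y=Y(a,m)$ and $A=a\Rightarrow M=M(a)$. (A2) monotonicity: $Y(1,1)\ge Y(1,0)\ge Y(0,0)$, $Y(1,1)\ge Y(0,1)$, $M(1)\ge M(0)$. (A6) $P\{P(Y=1\mid A=1,M=1,X)\ge\epsilon\}=1$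 for some $\epsilon>0$. *)

(* Defs.v *)
From HB Require Import structures.
From mathcomp Require Import all_boot all_order all_algebra.
From mathcomp Require Import all_classical all_reals all_analysis.
Set Implicit Arguments. Unset Strict Implicit. Unset Printing Implicit Defensive.
Import Order.TTheory GRing.Theory Num.Theory.
Local Open Scope classical_set_scope.
Local Open Scope ring_scope.

Section defs.
Context {d : measure_display} {Omega : measurableType d} {R : realType}
  {dX : measure_display} {TX : measurableType dX}.

(** A binary random variable (modelled by [bool], [true] = 1):
    all its level sets are events. *)
Definition bool_rv (V : Omega -> bool) : Prop :=
  forall b, measurable [set w | V w = b].

(** [f] is a version of the conditional probability x |-> P(E | X = x):
    f is measurable and, for every measurable B,
    P(E /\ X \in B) = \int_{X \in B} f(X) dP. *)
Definition cprob_version (P : probability Omega R) (X : Omega -> TX)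
    (E : set Omega) (f : TX -> R) : Prop :=
  measurable_fun setT f /\
  forall B, measurable B ->
    P (E `&` X @^-1` B) = (\int[P]_(w in X @^-1` B) (f (X w))%:E)%E.

(** [f] is a version of x |-> P(E | F, X = x) := P(E /\ F | X = x) / P(F | X = x). *)
Definition ccprob_version (P : probability Omega R) (X : Omega -> TX)
    (E F : set Omega) (f : TX -> R) : Prop :=
  exists g h, cprob_version P X (E `&` F) g /\ cprob_version P X F h /\
    f = (fun x => g x / h x).

Definition cond_indep_events (P : probability Omega R) (X : Omega -> TX)
    (E F : set Omega) : Prop :=
  exists f g h, cprob_version P X (E `&` F) f /\ cprob_version P X E g /\
    cprob_version P X F h /\
    {ae P, forall w, f (X w) = g (X w) * h (X w)}.

End defs.

(* Main.v *)
Require Import Defs.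
From HB Require Import structures.
From mathcomp Require Import all_boot all_order all_algebra.
From mathcomp Require Import all_classical all_reals all_analysis.
From mathcomp Require Import measurable_realfun ring lra.
Import Order.TTheory GRing.Theory Num.Theory.
Local Open Scope classical_set_scope.
Local Open Scope ring_scope.

Section helpers.
Context {d : measure_display} {Omega : measurableType d} {R : realType}
  {dX : measure_display} {TX : measurableType dX}.
Context {P : probability Omega R} {X : Omega -> TX}.
Variable (mX : measurable_fun setT X).

Local Notation v := (cprob_version P X).

Lemma mpre {B} : measurable B -> measurable (X @^-1` B).
Proof. by move=> mB; have := mX measurableT _ mB; rewrite setTI. Qed.

Lemma int_fin (h : Omega -> R) : measurable_fun setT h ->
  (\int[P]_(x in setT) (h x)%:E)%E \is a fin_num ->
  P.-integrable setT (EFin \o h).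
Proof.
move=> mh hfin; have mh' : measurable_fun setT ((EFin \o h) : Omega -> \bar R) by apply: measurableT_comp.
apply/integrableP; split => //.
move: hfin; rewrite integralE fin_numB => /andP[h1 h2].
rewrite (_ : (fun x => `|(EFin \o h) x|)%E = (EFin \o h)^\+ \+ (EFin \o h)^\-)%E; last first.
  by rewrite -fune_abse.
rewrite ge0_integralD//; last 2 first.
- exact: measurable_funepos.
- exact: measurable_funeneg.
by apply: lte_add_pinfty; rewrite ltey_eq; apply/orP; left.
Qed.

Lemma v_int {E f} : measurable E -> v E f -> P.-integrable setT (EFin \o (f \o X)).
Proof.
move=> mE [mf hf]; apply: int_fin; first exact: measurableT_comp.
have := hf setT measurableT; rewrite preimage_setT => <-.
by rewrite setIT fin_num_measure.
Qed.

Lemma ae_le_core (f g : TX -> R) : measurable_fun setT f -> measurable_fun setT g ->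
  P.-integrable setT (EFin \o (f \o X)) -> P.-integrable setT (EFin \o (g \o X)) ->
  (forall B, measurable B ->
    (\int[P]_(w in X @^-1` B) (f (X w))%:E <= \int[P]_(w in X @^-1` B) (g (X w))%:E)%E) ->
  {ae P, forall w, f (X w) <= g (X w)}.
Proof.
move=> mf mg iff ig hle.
pose B := [set x | g x < f x].
have mB : measurable B.
  have mf' : measurable_fun setT ((EFin \o f) : TX -> \bar R) by apply: measurableT_comp.
  have mg' : measurable_fun setT ((EFin \o g) : TX -> \bar R) by apply: measurableT_comp.
  have := measurable_lte measurableT mg' mf'; rewrite setTI.
  by rewrite (_ : [set x | _] = B)//; apply/seteqP; split => x /=; rewrite lte_fin.
pose D := X @^-1` B; have mD : measurable D := mpre mB.
pose h := fun w => f (X w) - g (X w).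
have hpos w : D w -> 0 < h w by rewrite /h subr_gt0.
have mfX : measurable_fun setT (f \o X) by apply: measurableT_comp.
have mgX : measurable_fun setT (g \o X) by apply: measurableT_comp.
have mh : measurable_fun D ((EFin \o h) : Omega -> \bar R).
  apply: measurableT_comp => //; apply: (measurable_funS measurableT) => //.
  exact: measurable_funB.
have int0 : (\int[P]_(w in D) `|(EFin \o h) w| = 0)%E.
  apply/eqP; rewrite eq_le integral_ge0 ?andbT; last by move=> *.
  rewrite (eq_integral (fun w => (f (X w))%:E - (g (X w))%:E))%E; last first.
    move=> w /[!inE] Dw; rewrite /= ger0_norm; [by [] | exact/ltW/hpos].
  rewrite integralB_EFin //; last 2 first.
  - exact: (integrableS measurableT).
  - exact: (integrableS measurableT).
  by rewrite sube_le0; exact: hle.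
have := (ae_eq_integral_abs P mD mh).1 int0.
apply: filterS => w H; rewrite leNgt; apply/negP => Hlt.
have := H Hlt => /= /eqP; rewrite eqe => /eqP h0.
by have := hpos w Hlt; rewrite h0 ltxx.
Qed.

Lemma v_le {E F f g} : measurable E -> measurable F -> E `<=` F -> v E f -> v F g ->
  {ae P, forall w, f (X w) <= g (X w)}.
Proof.
move=> mE mF EF vf vg; apply: ae_le_core.
- exact: vf.1.
- exact: vg.1.
- exact: v_int vf.
- exact: v_int vg.
move=> B mB; rewrite -vf.2 // -vg.2 //; apply: le_measure; rewrite ?inE.
- by apply: measurableI => //; exact: mpre.
- by apply: measurableI => //; exact: mpre.
by apply: setSI.
Qed.

Lemma v_uniq {E f g} : measurable E -> v E f -> v E g ->
  {ae P, forall w, f (X w) = g (X w)}.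
Proof.
move=> mE vf vg.
have h1 := v_le mE mE (@subset_refl _ E) vf vg.
have h2 := v_le mE mE (@subset_refl _ E) vg vf.
near=> w; apply/le_anti/andP; split; [exact: (near h1 w)|exact: (near h2 w)].
Unshelve. all: by end_near. Qed.

Lemma v_eq {E F f} : E = F -> v E f -> v F f.
Proof. by move=> ->. Qed.

Lemma v_set0 : v set0 (fun _ => 0).
Proof.
split; first exact: measurable_cst.
by move=> B mB; rewrite set0I measure0 integral0.
Qed.

Lemma v_add {E F f g} : measurable E -> measurable F -> E `&` F = set0 ->
  v E f -> v F g -> v (E `|` F) (f \+ g).
Proof.
move=> mE mF EF0 vf vg; split; first exact: measurable_funD vf.1 vg.1.
move=> B mB; have mD := mpre mB.
rewrite setIUl integralD_EFin //; last 2 first.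
- exact: (integrableS measurableT) (v_int mE vf).
- exact: (integrableS measurableT) (v_int mF vg).
rewrite -(proj2 vf B mB) -(proj2 vg B mB); apply: measureU.
- exact: measurableI.
- exact: measurableI.
- by rewrite setIACA EF0 set0I.
Qed.

Local Notation ci := (cond_indep_events P X).

Lemma ci_all {E F f g h} : measurable E -> measurable F -> ci E F ->
  v (E `&` F) f -> v E g -> v F h ->
  {ae P, forall w, f (X w) = g (X w) * h (X w)}.
Proof.
move=> mE mF [f' [g' [h' [vf' [vg' [vh' H]]]]]] vf vg vh.
have e1 := v_uniq (measurableI _ _ mE mF) vf vf'.
have e2 := v_uniq mE vg vg'.
have e3 := v_uniq mF vh vh'.
near=> w.
have -> : f (X w) = f' (X w) by near: w; exact: e1.
have -> : g (X w) = g' (X w) by near: w; exact: e2.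
have -> : h (X w) = h' (X w) by near: w; exact: e3.
near: w; exact: H.
Unshelve. all: by end_near. Qed.

Lemma ci_sym {E F} : ci E F -> ci F E.
Proof.
move=> [f [g [h [vf [vg [vh H]]]]]]; exists f, h, g; split; first by rewrite setIC.
split => //; split => //; apply: filterS H => w ->; exact: mulrC.
Qed.

Lemma ci_union {E F1 F2} : measurable E -> measurable F1 -> measurable F2 ->
  F1 `&` F2 = set0 -> ci E F1 -> ci E F2 -> ci E (F1 `|` F2).
Proof.
move=> mE m1 m2 d12 [f1 [g1 [h1 [vf1 [vg1 [vh1 H1]]]]]]
  [f2 [g2 [h2 [vf2 [vg2 [vh2 H2]]]]]].
exists (f1 \+ f2), g1, (h1 \+ h2); split.
  rewrite setIUr; apply: v_add => //.
  - exact: measurableI.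
  - exact: measurableI.
  - by rewrite setIACA d12 setI0.
split => //; split; first exact: v_add.
have e := v_uniq mE vg2 vg1.
near=> w; rewrite /=.
have -> : f1 (X w) = g1 (X w) * h1 (X w) by near: w; exact: H1.
have -> : f2 (X w) = g2 (X w) * h2 (X w) by near: w; exact: H2.
have -> : g2 (X w) = g1 (X w) by near: w; exact: e.
by rewrite mulrDr.
Unshelve. all: by end_near. Qed.

Lemma ci_nil {E F} : ci E F -> ci E set0.
Proof.
move=> [f [g [h [vf [vg [vh H]]]]]]; exists (fun _ => 0), g, (fun _ => 0).
split; first by rewrite setI0; exact: v_set0.
split => //; split; first exact: v_set0.
by apply: aeW => w; rewrite mulr0.
Qed.

Lemma ci_fin (T : finType) (tf : Omega -> T) (E : set Omega) (t0 : T) :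
  measurable E -> (forall t, measurable [set w | tf w = t]) ->
  (forall t, ci E [set w | tf w = t]) ->
  forall Q : pred T, measurable [set w | Q (tf w)] /\ ci E [set w | Q (tf w)].
Proof.
move=> mE mt ht Q.
suff H : forall s : seq T, uniq s ->
    measurable [set w | tf w \in s] /\ ci E [set w | tf w \in s].
  have [H1 H2] := H _ (filter_uniq Q (enum_uniq T)).
  have -> : [set w | Q (tf w)] = [set w | tf w \in [seq t <- enum T | Q t]].
    by apply/seteqP; split => w /=; rewrite mem_filter mem_enum andbT.
  by [].
elim => [|t s IH] /=.
  move=> _; rewrite (_ : [set w | _] = set0); last by apply/seteqP; split => w.
  split; first exact: measurable0.
  exact: ci_nil (ht t0).
move=> /andP[ts us]; have [ms cs] := IH us.
have -> : [set w | tf w \in t :: s] = [set w | tf w = t] `|` [set w | tf w \in s].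
  apply/seteqP; split => w /=; rewrite inE.
    by case/orP => [/eqP->|]; [left|right].
  by case=> [->|->]; rewrite ?eqxx ?orbT.
have disj : [set w | tf w = t] `&` [set w | tf w \in s] = set0.
  by apply/seteqP; split => w //= [e ins]; move: ts; rewrite -e ins.
split; first exact: measurableU.
exact: ci_union.
Qed.

Lemma ci_eq {E F E' F'} : ci E F -> E = E' -> F = F' -> ci E' F'.
Proof. by move=> h <- <-. Qed.

Lemma ae_and {Q1 Q2 : set Omega} : {ae P, forall w, Q1 w} -> {ae P, forall w, Q2 w} ->
  {ae P, forall w, Q1 w /\ Q2 w}.
Proof.
move=> h1 h2; near=> w; split; near: w; [exact: h1|exact: h2].
Unshelve. all: by end_near. Qed.
End helpers.


Ltac bcase := repeat first [match goal with |- context [?Mp ?a ?w] => match type of (Mp a w) with bool => is_var w; is_var Mp; case: (Mp a w) end end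
  | match goal with |- context [?Yp ?a ?b ?w] => match type of (Yp a b w) with bool => is_var w; is_var Yp; case: (Yp a b w) end end
  | match goal with |- context [?A ?w] => match type of (A w) with bool => is_var w; is_var A; case: (A w) end end].
Lemma tT : (true = true) = True. Proof. by rewrite propeqE. Qed.
Lemma fF : (false = false) = True. Proof. by rewrite propeqE. Qed.
Lemma tF : (true = false) = False. Proof. by rewrite propeqE. Qed.
Lemma fT : (false = true) = False. Proof. by rewrite propeqE. Qed.
Ltac bfin := move=> /=; rewrite ?ltnn ?leq0n ?leqnn /is_true ?tT ?fF ?tF ?fT; tauto.
Ltac mes := repeat apply: measurableI; match goal with H : _ |- _ => exact: H end.

Ltac sq := apply/seteqP; split => w /=; bcase; bfin.
Ltac bstep := first [match goal with |- context [?Mp ?a ?w] => match type of (Mp a w) with bool => is_var w; is_var Mp; idtac "M" Mp a w; case: (Mp a w) end end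
  | match goal with |- context [?Yp ?a ?b ?w] => match type of (Yp a b w) with bool => is_var w; is_var Yp; idtac "Y" Yp a b w; case: (Yp a b w) end end
  | match goal with |- context [?A ?w] => match type of (A w) with bool => is_var w; is_var A; idtac "A" A w; case: (A w) end end].

Theorem mainTheorem4 (d : measure_display) (Omega : measurableType d)
  (R : realType) (P : probability Omega R) (n : nat)
  (X : Omega -> n.-tuple R) (A M Y : Omega -> bool)
  (Yp : bool -> bool -> Omega -> bool) (Mp : bool -> Omega -> bool) :
  measurable_fun setT X ->
  bool_rv A -> bool_rv M -> bool_rv Y ->
  (forall a m, bool_rv (Yp a m)) -> (forall a, bool_rv (Mp a)) ->
  (* (A1) consistency *)
  (forall w a m, A w = a -> M w = m -> Y w = Yp a m w) ->
  (forall w a, A w = a -> M w = Mp a w) ->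
  (* (A2) monotonicity *)
  (forall w, (Yp true false w <= Yp true true w)%N /\
             (Yp false false w <= Yp true false w)%N /\
             (Yp false true w <= Yp true true w)%N /\
             (Mp false w <= Mp true w)%N) ->
  (* (A6) *)
  (exists2 eps : R, 0 < eps &
     exists f, ccprob_version P X [set w | Y w = true]
                 [set w | A w = true /\ M w = true] f /\
               {ae P, forall w, eps <= f (X w)}) ->
  (* (a) A independent of {Y(1,1), Y(1,0), M(0), M(1)} given X *)
  (forall a y11 y10 m0 m1, cond_indep_events P X [set w | A w = a]
     [set w | Yp true true w = y11 /\ Yp true false w = y10 /\
              Mp false w = m0 /\ Mp true w = m1]) ->
  (* (b) {M(0), M(1)} independent of {Y(1,0), Y(1,1)} given X *)
  (forall m0 m1 y10 y11, cond_indep_events P X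
     [set w | Mp false w = m0 /\ Mp true w = m1]
     [set w | Yp true false w = y10 /\ Yp true true w = y11]) ->
  (* (c) positivity *)
  (exists2 eps : R, 0 < eps &
     (forall m, exists f, cprob_version P X [set w | A w = true /\ M w = m] f /\
                {ae P, forall w, eps <= f (X w)}) /\
     (exists f, cprob_version P X [set w | A w = false] f /\
                {ae P, forall w, eps <= f (X w)})) ->
  (* conclusion, for any versions of the conditional probabilities involved *)
  forall psi py pm mu10 mu11 gam0 gam1 : n.-tuple R -> R,
  ccprob_version P X
    [set w | Yp true (Mp false w) w = false /\ Yp false (Mp false w) w = false]
    [set w | Yp true (Mp true w) w = true /\ Mp true w = true] psi ->
  ccprob_version P X [set w | Yp true false w = false]
    [set w | Yp true true w = true] py ->
  ccprob_version P X [set w | Mp false w = false] [set w | Mp true w = true] pm ->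
  ccprob_version P X [set w | Y w = true]
    [set w | A w = true /\ M w = false] mu10 ->
  ccprob_version P X [set w | Y w = true]
    [set w | A w = true /\ M w = true] mu11 ->
  ccprob_version P X [set w | M w = true] [set w | A w = false] gam0 ->
  ccprob_version P X [set w | M w = true] [set w | A w = true] gam1 ->
  {ae P, forall w, psi (X w) = py (X w) * pm (X w)} /\
  {ae P, forall w, psi (X w) =
     (1 - mu10 (X w) / mu11 (X w)) * (1 - gam0 (X w) / gam1 (X w))}.
Proof.
move=> mX rA rM rY rYp rMp c1 c2 mono [e6 e60 [f6 [vf6 ae6]]] ha hb
  [ec ec0 [hc1 [fc0 [vfc0 aec0]]]] psi py pm mu10 mu11 gam0 gam1
  [gp [hp [vgp [vhp ->]]]] [gy [hy [vgy [vhy ->]]]] [gm [hm [vgm [vhm ->]]]]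
  [gn [hn [vgn [vhn ->]]]] [gu [hu [vgu [vhu ->]]]]
  [gg0 [hg0 [vgg0 [vhg0 ->]]]] [gg1 [hg1 [vgg1 [vhg1 ->]]]].
case: vf6 => [g6 [h6 [vg6 [vh6 ef6]]]].
have [fc1 [vfc1 aec1]] := hc1 true.
have [fcf [vfcf aecf]] := hc1 false.
pose tfM := fun w => (Mp false w, Mp true w).
pose tfY := fun w => (Yp true false w, Yp true true w).
have eM t : [set w | tfM w = t] = [set w | Mp false w = t.1 /\ Mp true w = t.2].
  by case: t => m0 m1; apply/seteqP; split => w; rewrite /tfM /tfY /=; [case=> -> -> | case=> -> ->].
have eY t : [set w | tfY w = t] = [set w | Yp true false w = t.1 /\ Yp true true w = t.2].
  by case: t => y0 y1; apply/seteqP; split => w; rewrite /tfM /tfY /=; [case=> -> -> | case=> -> ->].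
have mtM t : measurable [set w | tfM w = t] by rewrite eM; mes.
have mtY t : measurable [set w | tfY w = t] by rewrite eY; mes.
have ciB (Q Q' : pred (bool * bool)) : cond_indep_events P X [set w | Q' (tfM w)] [set w | Q (tfY w)].
  have h1 t : measurable [set w | Q (tfY w)] /\
      cond_indep_events P X [set w | tfM w = t] [set w | Q (tfY w)].
    apply: (ci_fin mX _ tfY _ (true, true)) => // t'; rewrite eM eY; exact: hb.
  have [mQ _] := h1 (true,true).
  have [mQ' c] : measurable [set w | Q' (tfM w)] /\
      cond_indep_events P X [set w | Q (tfY w)] [set w | Q' (tfM w)].
    apply: (ci_fin mX _ tfM _ (true,true)) => // t; exact: ci_sym (h1 t).2.
  exact: ci_sym.
have ciM1Y11 : cond_indep_events P X [set w | Mp true w = true]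
    [set w | Yp true true w = true].
  apply: (ci_eq (ciB (fun t => t.2) (fun t => t.2))); sq.
have ciM0Y10 : cond_indep_events P X [set w | Mp true w = false]
    [set w | Yp true false w = true].
  apply: (ci_eq (ciB (fun t => t.1) (fun t => ~~ t.2))); sq.
pose tfA := fun w => (Yp true true w, Yp true false w, Mp false w, Mp true w).
have eA t : [set w | tfA w = t] = [set w | Yp true true w = t.1.1.1 /\
    Yp true false w = t.1.1.2 /\ Mp false w = t.1.2 /\ Mp true w = t.2].
  case: t => [[[y11 y10] m0] m1]; apply/seteqP; split => w; rewrite /tfA /=.
    by case=> -> -> -> ->.
  by case=> -> [-> [-> ->]].
have mtA t : measurable [set w | tfA w = t] by rewrite eA; mes.
have ciA a (Q : pred (bool * bool * bool * bool)) : cond_indep_events P X [set w | A w = a] [set w | Q (tfA w)].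
  have h t : cond_indep_events P X [set w | A w = a] [set w | tfA w = t].
    by rewrite eA; exact: ha.
  exact: (ci_fin mX _ tfA _ (true,true,true,true) (rA a) mtA h Q).2.
have cA11 : cond_indep_events P X [set w | A w = true]
    [set w | Mp true w = true /\ Yp true true w = true].
  apply: (ci_eq (ciA true (fun t => t.2 && t.1.1.1))) => //; sq.
have cA1 : cond_indep_events P X [set w | A w = true] [set w | Mp true w = true].
  apply: (ci_eq (ciA true (fun t => t.2))) => //; sq.
have cA10 : cond_indep_events P X [set w | A w = true]
    [set w | Mp true w = false /\ Yp true false w = true].
  apply: (ci_eq (ciA true (fun t => ~~ t.2 && t.1.1.2))) => //; sq.
have cA0m : cond_indep_events P X [set w | A w = true] [set w | Mp true w = false].
  apply: (ci_eq (ciA true (fun t => ~~ t.2))) => //; sq.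
have cA0 : cond_indep_events P X [set w | A w = false] [set w | Mp false w = true].
  apply: (ci_eq (ciA false (fun t => t.1.2))) => //; sq.
have [_ [al [s11 [_ [val [vs11 _]]]]]] := cA11.
have [_ [_ [s1 [_ [_ [vs1 _]]]]]] := cA1.
have [_ [_ [s10 [_ [_ [vs10 _]]]]]] := cA10.
have [_ [_ [s0 [_ [_ [vs0 _]]]]]] := cA0m.
have [_ [al0 [t1 [_ [val0 [vt1 _]]]]]] := cA0.
have [_ [_ [y1 [_ [_ [vy1 _]]]]]] := ciM1Y11.
have [_ [_ [y10 [_ [_ [vy10 _]]]]]] := ciM0Y10.
have R1 : {ae P, forall w, gu (X w) = al (X w) * s11 (X w)}.
  apply: (ci_all mX _ _ cA11 (v_eq _ vgu) val vs11); try mes.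
  apply/seteqP; split => w /=; move: (c1 w true true) (c1 w true false) (c2 w true); bcase; bfin.
have R2 : {ae P, forall w, hu (X w) = al (X w) * s1 (X w)}.
  apply: (ci_all mX _ _ cA1 (v_eq _ vhu) val vs1); try mes.
  apply/seteqP; split => w /=; move: (c2 w true); bcase; bfin.
have R3 : {ae P, forall w, gn (X w) = al (X w) * s10 (X w)}.
  apply: (ci_all mX _ _ cA10 (v_eq _ vgn) val vs10); try mes.
  apply/seteqP; split => w /=; move: (c1 w true true) (c1 w true false) (c2 w true); bcase; bfin.
have R4 : {ae P, forall w, hn (X w) = al (X w) * s0 (X w)}.
  apply: (ci_all mX _ _ cA0m (v_eq _ vhn) val vs0); try mes.
  apply/seteqP; split => w /=; move: (c2 w true); bcase; bfin.
have R5 : {ae P, forall w, gg1 (X w) = al (X w) * s1 (X w)}.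
  apply: (ci_all mX _ _ cA1 (v_eq _ vgg1) val vs1); try mes.
  apply/seteqP; split => w /=; move: (c2 w true); bcase; bfin.
have R6 : {ae P, forall w, hg1 (X w) = al (X w)} by apply: (v_uniq mX _ vhg1 val); mes.
have R7 : {ae P, forall w, gg0 (X w) = al0 (X w) * t1 (X w)}.
  apply: (ci_all mX _ _ cA0 (v_eq _ vgg0) val0 vt1); try mes.
  apply/seteqP; split => w /=; move: (c2 w false); bcase; bfin.
have R8 : {ae P, forall w, hg0 (X w) = al0 (X w)} by apply: (v_uniq mX _ vhg0 val0); mes.
have R9 : {ae P, forall w, s11 (X w) = s1 (X w) * y1 (X w)}.
  by apply: (ci_all mX _ _ ciM1Y11 vs11 vs1 vy1); mes.
have R10 : {ae P, forall w, s10 (X w) = s0 (X w) * y10 (X w)}.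
  by apply: (ci_all mX _ _ ciM0Y10 vs10 vs0 vy10); mes.
have R11 : {ae P, forall w, hy (X w) = y1 (X w)} by apply: (v_uniq mX _ vhy vy1); mes.
have R12 : {ae P, forall w, y1 (X w) = gy (X w) + y10 (X w)}.
  have vsum := v_add mX _ _ _ vgy vy10.
  apply: (v_uniq mX _ vy1 (v_eq _ (vsum _ _ _))); try mes.
  - apply/seteqP; split => w /=; move: (mono w); bcase; bfin.
  - apply/seteqP; split => w /=; move: (mono w); bcase; bfin.
have R13 : {ae P, forall w, hm (X w) = s1 (X w)} by apply: (v_uniq mX _ vhm vs1); mes.
have R14 : {ae P, forall w, s1 (X w) = gm (X w) + t1 (X w)}.
  have vsum := v_add mX _ _ _ vgm vt1.
  apply: (v_uniq mX _ vs1 (v_eq _ (vsum _ _ _))); try mes.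
  - apply/seteqP; split => w /=; move: (mono w); bcase; bfin.
  - apply/seteqP; split => w /=; move: (mono w); bcase; bfin.
have R15 : {ae P, forall w, gp (X w) = gm (X w) * gy (X w)}.
  apply: (ci_all mX _ _ (hb false true false true) (v_eq _ vgp) vgm vgy); try mes.
  apply/seteqP; split => w /=; move: (mono w); bcase; bfin.
have R16 : {ae P, forall w, hp (X w) = s1 (X w) * y1 (X w)}.
  apply: (ci_all mX _ _ ciM1Y11 (v_eq _ vhp) vs1 vy1); try mes.
  apply/seteqP; split => w /=; bcase; bfin.
have B1 : {ae P, forall w, fc1 (X w) <= al (X w)}.
  by apply: (v_le mX _ _ _ vfc1 val); [mes|mes|move=> w []].
have B2 : {ae P, forall w, fc1 (X w) <= s1 (X w)}.
  apply: (v_le mX _ _ _ vfc1 vs1); [mes|mes|].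
  by move=> w /= [hA hM]; rewrite -(c2 w true hA).
have B3 : {ae P, forall w, fcf (X w) <= s0 (X w)}.
  apply: (v_le mX _ _ _ vfcf vs0); [mes|mes|].
  by move=> w /= [hA hM]; rewrite -(c2 w true hA).
have B4 : {ae P, forall w, fc0 (X w) = al0 (X w)} by apply: (v_uniq mX _ vfc0 val0); mes.
have B5 : {ae P, forall w, g6 (X w) = gu (X w)}.
  by apply: (v_uniq mX _ vg6 vgu); mes.
have B6 : {ae P, forall w, h6 (X w) = hu (X w)}.
  by apply: (v_uniq mX _ vh6 vhu); mes.
have AE := ae_and R1 (ae_and R2 (ae_and R3 (ae_and R4 (ae_and R5 (ae_and R6
  (ae_and R7 (ae_and R8 (ae_and R9 (ae_and R10 (ae_and R11 (ae_and R12
  (ae_and R13 (ae_and R14 (ae_and R15 (ae_and R16 (ae_and B1 (ae_and B2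
  (ae_and B3 (ae_and B4 (ae_and B5 (ae_and B6 (ae_and ae6 (ae_and aec1
  (ae_and aecf aec0)))))))))))))))))))))))).
split; apply: filterS AE => w /= [r1 [r2 [r3 [r4 [r5 [r6 [r7 [r8 [r9 [r10 [r11 [r12 [r13 [r14 [r15 [r16 [b1 [b2 [b3 [b4 [b5 [b6 [a6 [a1 [af a0]]]]]]]]]]]]]]]]]]]]]]]]].
  by rewrite r15 r16 r11 r13 invfM; ring.
have nal : al (X w) != 0 by apply: lt0r_neq0; apply: lt_le_trans ec0 (le_trans a1 b1).
have ns1 : s1 (X w) != 0 by apply: lt0r_neq0; apply: lt_le_trans ec0 (le_trans a1 b2).
have ns0 : s0 (X w) != 0 by apply: lt0r_neq0; apply: lt_le_trans ec0 (le_trans af b3).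
have nal0 : al0 (X w) != 0 by apply: lt0r_neq0; rewrite -b4; apply: lt_le_trans ec0 a0.
have ey : f6 (X w) = y1 (X w).
  rewrite ef6 /= b5 b6 r1 r2 r9.
  by field; rewrite ns1 nal.
have ny1 : y1 (X w) != 0.
  by apply: lt0r_neq0; rewrite -ey; exact: lt_le_trans e60 a6.
rewrite r15 r16 r3 r10 r4 r1 r9 r2 r7 r8 r5 r6.
move: ny1 ns1; rewrite r12 r14 => ny1 ns1.
by field; rewrite nal ns1 nal0 ny1 ns0.
Qed.
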